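(* Let $B\ge 1$, let $\mathcal{A}=\{1,\dots,A\}$ and let $\Phi:\{1,\dots,B\}\to\mathcal{A}$ be a function. Let $\Delta(\varepsilon)$, $\varepsilon\ge 0$, be a family of $B\times B$ stochastic matrices whose entries are analytic functions of $\varepsilon$ at $\varepsilon=0$, and such that for every $\varepsilon>0$, $\Delta(\varepsilon)$ is non-negative and irreducible. For $\varepsilon>0$ let $Y$ be the stationary Markov chain with transition matrix $\Delta(\varepsilon)$ and let $Z=\Phi(Y)$. Then for any fixed $n$ and any fixed sequence $z_{-n}^{0}\in\mathcal{A}^{n+1}$: (1) $p(z_{-n}^{-1})=P(Z_{-n}^{-1}=z_{-n}^{-1})$ is analytic around $\varepsilon=0$; (2) for each $i$ with $-n\le i\le -1$, the vector $p(y_i=\cdot\,|z_{-n}^i):=(P(Y_i=b\mid Z_{-n}^i=z_{-n}^i))_{b=1,\dots,B}$ is analytic around $\varepsilon=0$; (3) $p(z_0|z_{-n}^{-1})=P(Z_0=z_0\mid Z_{-n}^{-1}=z_{-n}^{-1})$ is analytic around $\varepsilon=0$.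
   Context: ''Analytic around $\varepsilon=0$'' means that the function, defined for small $\varepsilon>0$, coincides there with a function given by a convergent power series in $\varepsilon$ in a neighborhood of $0$ (i.e. it extends analytically to $\varepsilon=0$). For $a\in\mathcal{A}$, $\Delta_a$ denotes the $B\times B$ matrix with $\Delta_a(i,j)=\Delta(i,j)$ if $\Phi(j)=a$ and $\Delta_a(i,j)=0$ otherwise; so $p(z_{-n}^{-1})=\pi\Delta_{z_{-n}}\cdots\Delta_{z_{-1}}\mathbf{1}$ with $\pi=\pi(\varepsilon)$ the stationary vector of $\Delta(\varepsilon)$. Conditional probabilities are considered for sequences whose conditioning event has positive probability for small $\varepsilon>0$. *)

(* Defs.v *)
From HB Require Import structures.
From mathcomp Require Import all_boot all_order all_algebra.
From mathcomp Require Import all_classical all_reals all_analysis.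
Set Implicit Arguments. Unset Strict Implicit. Unset Printing Implicit Defensive.
Import Order.TTheory GRing.Theory Num.Theory numFieldNormedType.Exports.
Local Open Scope classical_set_scope.
Local Open Scope ring_scope.

Section Defs.
Variable R : realType.

Definition analytic_at0 (f : R -> R) : Prop :=
  exists (a : nat -> R) (r : R), 0 < r /\
    forall e, 0 < e < r ->
      (fun N : nat => \sum_(k < N) a k * e ^+ k) @ \oo --> f e.

Definition analytic_at0_closed (f : R -> R) : Prop :=
  exists (a : nat -> R) (r : R), 0 < r /\
    forall e, 0 <= e < r ->
      (fun N : nat => \sum_(k < N) a k * e ^+ k) @ \oo --> f e.

Variable B : nat.

Definition mpow (M : 'M[R]_B) (k : nat) : 'M[R]_B := iter k (mulmx M) 1%:M.

Definition row_stochastic (M : 'M[R]_B) : Prop :=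
  forall i : 'I_B, \sum_(j < B) M i j = 1.

Definition nonneg_mx (M : 'M[R]_B) : Prop := forall i j : 'I_B, 0 <= M i j.

Definition irreducible_mx (M : 'M[R]_B) : Prop :=
  forall i j : 'I_B, exists k : nat, 0 < mpow M k i j.

Definition stationary_dist (M : 'M[R]_B) (p : 'rV[R]_B) : Prop :=
  (forall j, 0 <= p 0 j) /\ \sum_(j < B) p 0 j = 1 /\ p *m M = p.

(* Finite-dimensional distributions of the stationary Markov chain Y with
   initial (stationary) law p and transition matrix M. *)
Fixpoint trans_prob (M : 'M[R]_B) (x : 'I_B) (ys : seq 'I_B) : R :=
  match ys with
  | [::] => 1
  | y :: ys' => M x y * trans_prob M y ys'
  end.

(* P(Y_t = y_0, ..., Y_{t+m-1} = y_{m-1}) *)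
Definition path_prob (p : 'rV[R]_B) (M : 'M[R]_B) (ys : seq 'I_B) : R :=
  match ys with
  | [::] => 1
  | y :: ys' => p 0 y * trans_prob M y ys'
  end.

Variable A : nat.
Variable Phi : 'I_B -> 'I_A.

(* P(Z_t^{t+m-1} = w) where Z = Phi(Y), m = size w *)
Definition cyl_prob (p : 'rV[R]_B) (M : 'M[R]_B) (w : seq 'I_A) : R :=
  \sum_(y : (size w).-tuple 'I_B | map Phi y == w) path_prob p M y.

(* P(Y_{t+m-1} = b, Z_t^{t+m-1} = w), m = size w *)
Definition joint_last (p : 'rV[R]_B) (M : 'M[R]_B) (w : seq 'I_A) (b : 'I_B) : R :=
  \sum_(y : (size w).-tuple 'I_B | (map Phi y == w) && (last b y == b))
     path_prob p M y.

(* P(Y_{t+m-1} = b | Z_t^{t+m-1} = w) *)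
Definition cond_state p M w b : R := joint_last p M w b / cyl_prob p M w.

(* P(Z_{t+m} = a | Z_t^{t+m-1} = w) *)
Definition cond_next p M w (a : 'I_A) : R :=
  cyl_prob p M (rcons w a) / cyl_prob p M w.

End Defs.

(* Main.v *)
Require Import Defs.
From HB Require Import structures.
From mathcomp Require Import all_boot all_order all_algebra.
From mathcomp Require Import all_classical all_reals all_analysis.
From mathcomp Require Import ring lra zify.
Import Order.TTheory GRing.Theory Num.Theory numFieldNormedType.Exports.
Set Implicit Arguments. Unset Strict Implicit. Unset Printing Implicit Defensive.
Local Open Scope classical_set_scope.
Local Open Scope ring_scope.

Section PS.
Variable R : realType.
Implicit Types (a b c : nat -> R) (f g h : R -> R).

Definition ps a (e : R) (N : nat) : R := \sum_(k < N) a k * e ^+ k.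
Definition gb a (C L : R) := forall k, `|a k| <= C * L ^+ k.
Definition rep a f := exists C L r : R, 0 < L /\ 0 < r /\ gb a C L /\
  forall e, 0 < e < r -> ps a e @ \oo --> f e.

Lemma leq_of_eq (x y : R) : x = y -> x <= y.
Proof. by move->. Qed.

Lemma gb_C a C L : gb a C L -> 0 <= C.
Proof. by move=> /(_ 0%N); rewrite expr0 mulr1; apply: le_trans. Qed.

Lemma gb_mono a C L C' L' : gb a C L -> C <= C' -> 0 <= L <= L' -> gb a C' L'.
Proof.
move=> g CC /andP[L0 LL] k; apply: (le_trans (g k)).
apply: ler_pM => //; first exact: gb_C g.
  by rewrite exprn_ge0.
by rewrite lerXn2r // ?nnegrE // (le_trans L0).
Qed.

Lemma geo_le2 (q : R) N : 0 <= q -> q <= 2^-1 -> \sum_(k < N) q ^+ k <= 2.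
Proof.
move=> q0 q2.
suff : \sum_(k < N) q ^+ k <= 2 - 2 * q ^+ N.
  by move/le_trans; apply; rewrite lerBlDr lerDl mulr_ge0 ?exprn_ge0.
elim: N => [|N IH]; first by rewrite big_ord0 expr0 mulr1 subrr.
rewrite big_ord_recl expr0 /=.
under eq_bigr do rewrite /bump /= add1n exprS.
rewrite -mulr_sumr.
have h1 : q * \sum_(i < N) q ^+ i <= q * (2 - 2 * q ^+ N) by apply: ler_wpM2l.
rewrite exprS.
have h2 : 2 * q <= 1.
  by move: q2; rewrite -(ler_pM2l (_ : 0 < 2)) // mulfV.
have h3 : 0 <= q ^+ N := exprn_ge0 _ q0.
nra.
Qed.


Lemma gb_term a C L e k : gb a C L -> 0 <= e -> `|a k * e ^+ k| <= C * (L * e) ^+ k.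
Proof.
move=> g e0; rewrite normrM normrX (ger0_norm e0) exprMn mulrA.
by apply: ler_wpM2r; rewrite ?exprn_ge0.
Qed.

Lemma ps_tail a C L e N : gb a C L -> 0 <= e -> 0 <= L -> L * e <= 2^-1 ->
  `|ps a e N.+1 - a 0%N| <= 2 * C * (L * e).
Proof.
move=> g e0 L0 Le.
rewrite /ps big_ord_recl expr0 mulr1 addrAC subrr add0r.
apply: (le_trans (ler_norm_sum _ _ _)).
apply: (@le_trans _ _ (\sum_(i<N) C * (L*e) * (L*e)^+i)).
  apply: ler_sum => i _; apply: (le_trans (gb_term _ g e0)).
  by rewrite exprS mulrA.
rewrite -mulr_sumr.
have h : \sum_(i < N) (L * e) ^+ i <= 2 by apply: geo_le2 => //; rewrite mulr_ge0.
have h2 : 0 <= C * (L * e) by rewrite mulr_ge0 ?(gb_C g) ?mulr_ge0.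
nra.
Qed.

Lemma ps_series a e : ps a e = series (fun k => a k * e ^+ k).
Proof. by apply/funext => n; rewrite /ps /series /= big_mkord. Qed.

Lemma ps_cvg a C L e : gb a C L -> 0 <= e -> 0 <= L -> L * e < 1 -> cvgn (ps a e).
Proof.
move=> g e0 L0 Le; rewrite ps_series; apply: normed_cvg.
apply: (@series_le_cvg _ _ (geometric C (L * e))) => //.
- by move=> n /=.
- by move=> n /=; rewrite mulr_ge0 ?(gb_C g) ?exprn_ge0 ?mulr_ge0.
- by move=> n /=; apply: gb_term.
- by apply: is_cvg_geometric_series; rewrite ger0_norm ?mulr_ge0.
Qed.


Lemma lim_uniq (u : nat -> R) (l1 l2 : R) : u @ \oo --> l1 -> u @ \oo --> l2 -> l1 = l2.
Proof.
move=> h1 h2; apply/eqP; rewrite eq_le.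
by rewrite (ler_cvg_to h1 h2) ?(ler_cvg_to h2 h1) //; apply: nearW.
Qed.

Lemma cvg_ev (u : nat -> R) K (v : R) : (forall n, u (n + K)%N = v) -> u @ \oo --> v.
Proof.
move=> h; rewrite -(cvg_shiftn K).
have -> : (fun n => u (n + K)%N) = (fun _ => v) by apply/funext => n; exact: h.
exact: cvg_cst.
Qed.

Lemma small_Le (L e : R) : 0 < L -> e < (4 * L)^-1 -> L * e < 4^-1.
Proof.
move=> L0 he.
have -> : (4^-1 : R) = L * (4 * L)^-1 by field; rewrite gt_eqF.
by rewrite ltr_pM2l.
Qed.

Lemma small_Le2 (L e : R) : 0 < L -> e < (4 * L)^-1 -> L * e <= 2^-1.
Proof.
move=> L0 he; apply/ltW; apply: (lt_le_trans (small_Le L0 he)).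
by rewrite lef_pV2 ?posrE // ler_nat.
Qed.

Lemma small_Le1 (L e : R) : 0 < L -> e < (4 * L)^-1 -> L * e < 1.
Proof.
move=> L0 he; apply: (lt_le_trans (small_Le L0 he)).
by rewrite invf_le1 ?ler1n.
Qed.

Lemma inv4L_gt0 (L : R) : 0 < L -> 0 < (4 * L)^-1.
Proof. by move=> L0; rewrite invr_gt0 mulr_gt0. Qed.

Lemma rep_value a f : rep a f ->
  exists d W, 0 < d /\ forall e, 0 < e < d -> `|f e - a 0%N| <= W * e.
Proof.
move=> [C [L [r [L0 [r0 [g cv]]]]]].
exists (Num.min r (4 * L)^-1), (2 * C * L); split.
  by rewrite lt_min r0 inv4L_gt0.
move=> e /andP[e0]; rewrite lt_min => /andP[er eL].
have hc : (fun N => `|ps a e (N + 1)%N - a 0%N|) @ \oo --> `|f e - a 0%N|.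
  apply: cvg_norm; apply: cvgB; last exact: cvg_cst.
  have := cv e; rewrite e0 er => /(_ isT).
  by rewrite -(cvg_shiftn 1).
apply: (ler_cvg_to hc (cvg_cst _)); apply: nearW => N.
rewrite addn1; have := ps_tail N g (ltW e0) (ltW L0) (small_Le2 L0 eL).
by rewrite !mulrA.
Qed.


Lemma rep_ext a f h : rep a f -> (exists d, 0 < d /\ forall e, 0 < e < d -> f e = h e) ->
  rep a h.
Proof.
move=> [C [L [r [L0 [r0 [g cv]]]]]] [d [d0 fh]].
exists C, L, (Num.min r d); split => //; split; first by rewrite lt_min r0.
split => // e /andP[e0]; rewrite lt_min => /andP[er ed].
by rewrite -fh ?e0 ?ed //; apply: cv; rewrite e0.
Qed.

Lemma rep_zero a f : rep a f -> (forall k, a k = 0) ->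
  exists d, 0 < d /\ forall e, 0 < e < d -> f e = 0.
Proof.
move=> [C [L [r [L0 [r0 [g cv]]]]]] a0; exists r; split => // e he.
apply: (lim_uniq (cv e he)); apply: (@cvg_ev _ 0%N) => n.
by rewrite /ps big1 // => i _; rewrite a0 mul0r.
Qed.

Lemma rep_add a b f g : rep a f -> rep b g ->
  rep (fun k => a k + b k) (fun e => f e + g e).
Proof.
move=> [C1 [L1 [r1 [L10 [r10 [g1 cv1]]]]]] [C2 [L2 [r2 [L20 [r20 [g2 cv2]]]]]].
exists (C1 + C2), (Num.max L1 L2), (Num.min r1 r2); split.
  by rewrite lt_max L10.
split; first by rewrite lt_min r10.
split.
  move=> k; apply: (le_trans (ler_normD _ _)); rewrite mulrDl.
  apply: lerD; [apply: (gb_mono g1) | apply: (gb_mono g2)]; rewrite ?lerDl ?lerDr ?(gb_C g1) ?(gb_C g2) ?le_max ?lexx ?orbT ?(ltW L10) ?(ltW L20) //.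
move=> e /andP[e0]; rewrite lt_min => /andP[e1 e2].
have -> : ps (fun k => a k + b k) e = ps a e + ps b e.
  by apply/funext => N; rewrite -[RHS]/(ps a e N + ps b e N) /ps -big_split /=; apply: eq_bigr => i _; rewrite mulrDl.
have h1 : ps a e @ \oo --> f e by apply: cv1; rewrite e0.
have h2 : ps b e @ \oo --> g e by apply: cv2; rewrite e0.
exact: cvgD h1 h2.
Qed.

Lemma rep_cst (v : R) : rep (fun k => if k == 0%N then v else 0) (fun _ => v).
Proof.
exists `|v|, 1, 1; split => //; split => //; split.
  by case=> [|k]; rewrite /= expr1n mulr1 ?normr0.
move=> e _; apply: (@cvg_ev _ 1%N) => n; rewrite addn1 /ps big_ord_recl /= expr0 mulr1.
by rewrite big1 ?addr0 // => i _; rewrite /= mul0r.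
Qed.

Lemma rep_id : rep (fun k => (k == 1%N)%:R) (fun e => e).
Proof.
exists 1, 1, 1; split => //; split => //; split.
  by case=> [|[|k]]; rewrite /= expr1n mulr1 ?normr0 ?normr1.
move=> e _; apply: (@cvg_ev _ 2%N) => n; rewrite addn2 /ps !big_ord_recl /=.
rewrite big1 ?addr0 ?mul0r ?add0r ?mul1r ?expr1 // => i _; by rewrite /= mul0r.
Qed.


Definition cprod a b (n : nat) : R := \sum_(i < n.+1) a i * b (n - i)%N.

Lemma tri_sum (F : nat -> nat -> R) N :
  \sum_(n < N) \sum_(i < n.+1) F i (n - i)%N =
  \sum_(i < N) \sum_(j < N | (i + j < N)%N) F i j.
Proof.
transitivity (\sum_(n < N) \sum_(i < N) (if (i < n.+1)%N then F i (n - i)%N else 0)).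
  apply: eq_bigr => n _.
  by rewrite (big_ord_widen _ (fun i => F i (n - i)%N) (ltn_ord n)) big_mkcond.
rewrite exchange_big /=; apply: eq_bigr => i _.
rewrite [RHS]big_mkcond /=.
rewrite -(big_mkord xpredT (fun n => if (i < n.+1)%N then F i (n - i)%N else 0)).
rewrite -(big_mkord xpredT (fun j => if (i + j < N)%N then F i j else 0)).
rewrite (@big_cat_nat _ _ _ i 0 N _ _ (leq0n i) (ltnW (ltn_ord i))) /=.
rewrite big_nat_cond big1 ?add0r; last first.
  by move=> n /andP[/andP[_ ni] _]; rewrite ltnS leqNgt ni.
rewrite (@big_cat_nat _ _ _ (N - i) 0 N _ _ (leq0n (N - i)) (leq_subr i N)) /=.
rewrite [X in _ = _ + X]big_nat_cond [X in _ = _ + X]big1 ?addr0; last first.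
  move=> j /andP[/andP[h1 h2] _].
  by have -> : (i + j < N)%N = false by lia.
rewrite -{1}(add0n i) big_addn big_nat_cond [RHS]big_nat_cond.
apply: eq_bigr => j /andP[/andP[_ hj] _].
have -> : (i < (j + i).+1)%N by lia.
have -> : (i + j < N)%N by lia.
by rewrite addnK.
Qed.


Lemma ps_cprod a b e N : ps (cprod a b) e N =
  \sum_(i < N) \sum_(j < N | (i + j < N)%N) a i * b j * e ^+ (i + j).
Proof.
rewrite /ps /cprod -(tri_sum (fun i j => a i * b j * e ^+ (i + j))).
apply: eq_bigr => n _; rewrite mulr_suml; apply: eq_bigr => i _.
by rewrite subnKC // -ltnS.
Qed.

Lemma ps_mul_split a b e N : ps a e N * ps b e N = ps (cprod a b) e N +
  \sum_(i < N) \sum_(j < N | ~~ (i + j < N)%N) a i * b j * e ^+ (i + j).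
Proof.
rewrite ps_cprod -big_split /= /ps big_distrlr /=; apply: eq_bigr => i _.
rewrite (bigID (fun j : 'I_N => (i + j < N)%N)) /=.
by congr (_ + _); apply: eq_bigr => j _; rewrite exprD; ring.
Qed.

Lemma err_bound a b C1 C2 L e N : gb a C1 L -> gb b C2 L -> 0 <= e -> 0 <= L ->
  L * e <= 4^-1 ->
  `|\sum_(i < N) \sum_(j < N | ~~ (i + j < N)%N) a i * b j * e ^+ (i + j)|
    <= 4 * (C1 * C2) * (2^-1) ^+ N.
Proof.
move=> g1 g2 e0 L0 Le.
have C10 := gb_C g1; have C20 := gb_C g2.
have h0 : 0 <= (2^-1 : R) by rewrite invr_ge0.
have h1 : (2^-1 : R) <= 2^-1 by [].
have q0 : 0 <= L * e by rewrite mulr_ge0.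
have key : forall k, (L * e) ^+ k <= (2^-1) ^+ k * (2^-1) ^+ k.
  move=> k; rewrite -exprMn; apply: lerXn2r; rewrite ?nnegrE ?mulr_ge0 //.
  by rewrite -invfM -natrM.
apply: (le_trans (ler_norm_sum _ _ _)).
apply: (@le_trans _ _ (\sum_(i < N) \sum_(j < N)
   (C1 * C2 * (2^-1) ^+ N) * ((2^-1) ^+ i * (2^-1) ^+ j))).
  apply: ler_sum => i _; apply: (le_trans (ler_norm_sum _ _ _)).
  rewrite big_mkcond; apply: ler_sum => j _.
  case: ifP => hij; last first.
    by rewrite !mulr_ge0 ?exprn_ge0.
  have -> : a i * b j * e ^+ (i + j) = (a i * e ^+ i) * (b j * e ^+ j).
    by rewrite exprD; ring.
  rewrite normrM.
  apply: (le_trans (ler_pM _ _ (gb_term i g1 e0) (gb_term j g2 e0))) => //.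
  have hN : (2^-1 : R) ^+ (i + j) <= (2^-1) ^+ N.
    by apply: ler_wiXn2l => //; [rewrite invf_le1 ?ler1n | rewrite leqNgt].
  have ki := key i; have kj := key j.
  have p1 : 0 <= (L * e) ^+ i by rewrite exprn_ge0.
  have p2 : 0 <= (L * e) ^+ j by rewrite exprn_ge0.
  have p3 : 0 <= (2^-1 : R) ^+ i by rewrite exprn_ge0.
  have p4 : 0 <= (2^-1 : R) ^+ j by rewrite exprn_ge0.
  have p5 : 0 <= (2^-1 : R) ^+ N by rewrite exprn_ge0.
  rewrite exprD in hN.
  have p6 : (L * e) ^+ i * (L * e) ^+ j <= (2^-1) ^+ i * (2^-1) ^+ j * ((2^-1) ^+ N).
    apply: (le_trans (ler_pM p1 p2 ki kj)).
    have -> : (2^-1 : R) ^+ i * 2^-1 ^+ i * (2^-1 ^+ j * 2^-1 ^+ j) =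
      (2^-1) ^+ i * (2^-1) ^+ j * ((2^-1) ^+ i * (2^-1) ^+ j) by ring.
    by apply: ler_wpM2l; rewrite ?mulr_ge0.
  have p7 : 0 <= C1 * C2 by rewrite mulr_ge0.
  have -> : C1 * (L * e) ^+ i * (C2 * (L * e) ^+ j) =
     (C1 * C2) * ((L * e) ^+ i * (L * e) ^+ j) by ring.
  have -> : C1 * C2 * 2^-1 ^+ N * (2^-1 ^+ i * 2^-1 ^+ j) =
     (C1 * C2) * ((2^-1) ^+ i * (2^-1) ^+ j * ((2^-1) ^+ N)) by ring.
  by apply: ler_wpM2l.
under eq_bigr do rewrite -mulr_sumr.
under eq_bigr do rewrite -mulr_sumr.
rewrite -mulr_sumr -big_distrl /=.
have s1 := geo_le2 N h0 h1.
have s2 : 0 <= \sum_(i < N) (2^-1 : R) ^+ i by rewrite sumr_ge0 // => i _; rewrite exprn_ge0.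
have p5 : 0 <= (2^-1 : R) ^+ N by rewrite exprn_ge0.
have p7 : 0 <= C1 * C2 by rewrite mulr_ge0.
have p8 : 0 <= C1 * C2 * 2^-1 ^+ N by rewrite mulr_ge0.
have s3 : (\sum_(i < N) (2^-1 : R) ^+ i) * (\sum_(i < N) (2^-1 : R) ^+ i) <= 4.
  have -> : (4 : R) = 2 * 2 by rewrite -natrM.
  by apply: ler_pM.
have := ler_wpM2l p8 s3; rewrite mulrC.
by move/le_trans; apply; rewrite mulrC -!mulrA.
Qed.


Lemma gb_cprod a b C1 C2 L : gb a C1 L -> gb b C2 L -> 0 <= L ->
  gb (cprod a b) (C1 * C2) (2 * L).
Proof.
move=> g1 g2 L0 n; rewrite /cprod.
apply: (le_trans (ler_norm_sum _ _ _)).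
apply: (@le_trans _ _ (\sum_(i < n.+1) C1 * C2 * L ^+ n)).
  apply: ler_sum => i _; rewrite normrM.
  have := ler_pM (normr_ge0 _) (normr_ge0 _) (g1 i) (g2 (n - i)%N).
  by move/le_trans; apply; rewrite mulrACA -exprD subnKC // -ltnS.
rewrite sumr_const card_ord exprMn -(mulr_natr (C1 * C2 * L ^+ n)).
have hn : (n.+1%:R : R) <= 2 ^+ n by rewrite -natrX ler_nat ltn_expl.
have p : 0 <= C1 * C2 * L ^+ n by rewrite !mulr_ge0 ?(gb_C g1) ?(gb_C g2) ?exprn_ge0.
have := ler_wpM2l p hn; move/le_trans; apply.
by rewrite [2 ^+ n * _]mulrC mulrA.
Qed.

Lemma rep_mul a b f g : rep a f -> rep b g ->
  rep (cprod a b) (fun e => f e * g e).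
Proof.
move=> [C1 [L1 [r1 [L10 [r10 [g1 cv1]]]]]] [C2 [L2 [r2 [L20 [r20 [g2 cv2]]]]]].
set L := Num.max L1 L2.
have L0 : 0 < L by rewrite lt_max L10.
have g1' : gb a C1 L.
  by apply: (gb_mono g1); rewrite ?lexx // ?le_max ?lexx ?(ltW L10).
have g2' : gb b C2 L.
  by apply: (gb_mono g2); rewrite ?lexx // ?le_max ?lexx ?orbT ?(ltW L20).
exists (C1 * C2), (2 * L), (Num.min (Num.min r1 r2) (4 * L)^-1); split.
  by rewrite mulr_gt0.
split; first by rewrite !lt_min r10 r20 inv4L_gt0.
split; first exact: gb_cprod (ltW L0).
move=> e /andP[e0]; rewrite !lt_min => /andP[/andP[e1 e2] eL].
have h1 : ps a e @ \oo --> f e by apply: cv1; rewrite e0.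
have h2 : ps b e @ \oo --> g e by apply: cv2; rewrite e0.
set err := fun N => \sum_(i < N) \sum_(j < N | ~~ (i + j < N)%N) a i * b j * e ^+ (i + j).
have -> : ps (cprod a b) e = (fun N => ps a e N * ps b e N - err N).
  by apply/funext => N; rewrite ps_mul_split addrK.
have herr : err @ \oo --> 0.
  have hg := @cvg_geometric R (4 * (C1 * C2)) 2^-1.
  have hg' : geometric (4 * (C1 * C2)) 2^-1 @ \oo --> (0 : R).
    by apply: hg; rewrite gtr0_norm ?invr_gt0 // invf_lt1 ?ltr1n.
  apply: (@squeeze_cvgr _ _ _ _ (fun N => - geometric (4 * (C1 * C2)) 2^-1 N)
    (geometric (4 * (C1 * C2)) 2^-1)); last exact: hg'.
    apply: nearW => N; rewrite -ler_norml /=.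
    apply: err_bound g1' g2' (ltW e0) (ltW L0) _.
    exact: ltW (small_Le L0 eL).
  by rewrite -oppr0; apply: cvgN.
have := cvgB (cvgM h1 h2) herr; rewrite subr0.
move=> H; exact: H.
Qed.


Lemma rep_shift a f m : rep a f -> (forall k, (k < m)%N -> a k = 0) ->
  rep (fun k => a (k + m)%N) (fun e => f e / e ^+ m).
Proof.
move=> [C [L [r [L0 [r0 [g cv]]]]]] am.
exists (C * L ^+ m), L, r; split => //; split => //; split.
  by move=> k; rewrite -mulrA -exprD addnC; apply: g.
move=> e he; have e0 : 0 < e by case/andP: he.
have hs : forall N, ps a e (N + m)%N = e ^+ m * ps (fun k => a (k + m)%N) e N.
  move=> N; rewrite /ps addnC big_split_ord /= big1 ?add0r; last first.
    by move=> i _; rewrite am ?mul0r.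
  rewrite mulr_sumr; apply: eq_bigr => i _ /=.
  by rewrite exprD addnC; ring.
have : ps a e (N + m)%N @[N --> \oo] --> f e.
  by have := cv e he; rewrite -(cvg_shiftn m).
move=> H.
have -> : ps (fun k => a (k + m)%N) e = (fun N => (e ^+ m)^-1 * ps a e (N + m)%N).
  apply/funext => N; rewrite hs mulrA mulVf ?mul1r //.
  by rewrite expf_neq0 // gt_eqF.
rewrite /= [f e / _]mulrC; exact: cvgM (cvg_cst _) H.
Qed.


Section Inv.
Variable a : nat -> R.

Fixpoint invl (n : nat) : seq R :=
  if n is n'.+1 then
    rcons (invl n') (- (a 0%N)^-1 * \sum_(k < n'.+1) a k.+1 * nth 0 (invl n') (n' - k)%N)
  else [:: (a 0%N)^-1].

Lemma size_invl n : size (invl n) = n.+1.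
Proof. by elim: n => [|n IH] //=; rewrite size_rcons IH. Qed.

Lemma nth_invl n i : (i <= n)%N -> nth 0 (invl n) i = nth 0 (invl i) i.
Proof.
elim: n => [|n IH]; first by rewrite leqn0 => /eqP->.
rewrite leq_eqVlt => /orP[/eqP->//|]; rewrite ltnS => hi.
by rewrite /= nth_rcons size_invl ltnS hi IH.
Qed.

Definition cinv i := nth 0 (invl i) i.

Lemma cinv0 : cinv 0%N = (a 0%N)^-1.
Proof. by []. Qed.

Lemma cinvS n : cinv n.+1 = - (a 0%N)^-1 * \sum_(k < n.+1) a k.+1 * cinv (n - k)%N.
Proof.
rewrite /cinv /= nth_rcons size_invl ltnn eqxx; congr (_ * _).
by apply: eq_bigr => k _; rewrite nth_invl // leq_subr.
Qed.

Lemma cprod_inv n : a 0%N != 0 -> cprod a cinv n = (n == 0%N)%:R.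
Proof.
move=> a0; case: n => [|n].
  by rewrite /cprod big_ord1 cinv0 mulfV.
rewrite /cprod big_ord_recl subn0 cinvS /=.
have -> : \sum_(i < n.+1) a (bump 0 i) * cinv (n.+1 - bump 0 i)%N =
  \sum_(k < n.+1) a k.+1 * cinv (n - k)%N.
  by apply: eq_bigr => i _; rewrite /bump /= add1n subSS.
by rewrite mulrA mulrN mulfV // mulN1r addNr.
Qed.

Lemma gb_cinv C L : a 0%N != 0 -> gb a C L -> 0 < L ->
  gb cinv `|a 0%N|^-1 (L * (2 * C * `|a 0%N|^-1 + 2)).
Proof.
move=> a0 g L0.
set D := `|a 0%N|^-1; set M := L * (2 * C * D + 2).
have C0 := gb_C g.
have D0 : 0 < D by rewrite invr_gt0 normr_gt0.
set t := (2 * C * D + 2)^-1.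
have K0 : 0 < 2 * C * D + 2 by rewrite ltr_wpDl ?mulr_ge0 ?(ltW D0).
have t0 : 0 < t by rewrite invr_gt0.
have Lt : L = t * M by rewrite /t /M mulrCA mulVf ?mulr1 // gt_eqF.
have M0 : 0 < M by rewrite mulr_gt0.
have t2 : t <= 2^-1.
  by rewrite /t lef_pV2 ?posrE // lerDr mulr_ge0 ?mulr_ge0 ?(ltW D0).
have tCD : 2 * C * D * t <= 1.
  by rewrite /t ler_pdivrMr // mul1r lerDl.
suff : forall n i, (i <= n)%N -> `|cinv i| <= D * M ^+ i.
  by move=> H k; apply: (H k).
elim=> [|n IH] i.
  by rewrite leqn0 => /eqP->; rewrite cinv0 expr0 mulr1 normfV.
rewrite leq_eqVlt => /orP[/eqP->|]; last by rewrite ltnS; apply: IH.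
rewrite cinvS normrM normrN normfV -/D.
apply: ler_wpM2l; first exact: ltW.
apply: (le_trans (ler_norm_sum _ _ _)).
apply: (@le_trans _ _ (\sum_(k < n.+1) (C * D * t) * M ^+ n.+1 * t ^+ k)).
  apply: ler_sum => k _; rewrite normrM.
  have hk : (n - k <= n)%N by rewrite leq_subr.
  have := ler_pM (normr_ge0 _) (normr_ge0 _) (g k.+1) (IH _ hk).
  move/le_trans; apply.
  have -> : C * L ^+ k.+1 * (D * M ^+ (n - k)%N) = C * D * (L ^+ k.+1 * M ^+ (n - k)%N)
    by ring.
  have -> : L ^+ k.+1 * M ^+ (n - k)%N = t ^+ k.+1 * M ^+ n.+1.
    rewrite Lt exprMn -mulrA -exprD.
    by rewrite addSn subnKC // -ltnS.
  by apply: leq_of_eq; rewrite exprS; ring.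
rewrite -mulr_sumr.
have s := geo_le2 n.+1 (ltW t0) t2.
have p : 0 <= C * D * t * M ^+ n.+1 by rewrite !mulr_ge0 ?exprn_ge0 ?(ltW D0) ?(ltW t0) ?(ltW M0).
have := ler_wpM2l p s; move/le_trans; apply.
have pM : 0 <= M ^+ n.+1 by rewrite exprn_ge0 ?(ltW M0).
have := ler_wpM2r pM tCD; rewrite mul1r.
by move/(le_trans _); apply; apply: leq_of_eq; ring.
Qed.

End Inv.

Lemma ps_delta0 (c : nat -> R) e n : (forall k, c k = (k == 0%N)%:R) -> ps c e (n + 1)%N = 1.
Proof.
move=> hc; rewrite addn1 /ps big_ord_recl hc expr0 mulr1 big1 ?addr0 // => i _.
by rewrite hc /= mul0r.
Qed.

Lemma rep_inv a f : rep a f -> a 0%N != 0 -> exists c, rep c (fun e => (f e)^-1).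
Proof.
move=> ra a0; have [C [L [r [L0 [r0 [g cv]]]]]] := ra.
have gc := gb_cinv a0 g L0.
set M := L * (2 * C * `|a 0%N|^-1 + 2) in gc.
have M0 : 0 < M.
  by rewrite mulr_gt0 // ltr_wpDl ?mulr_ge0 ?(gb_C g) ?invr_ge0.
set u := fun e => lim (ps (cinv a) e @ \oo).
have ru : rep (cinv a) u.
  exists `|a 0%N|^-1, M, (4 * M)^-1; split => //; split; first exact: inv4L_gt0.
  split => // e /andP[e0 eM].
  apply: cvg_toP => //.
  exact: ps_cvg gc (ltW e0) (ltW M0) (small_Le1 M0 eM).
have [C' [L' [r' [_ [r'0 [_ cvp]]]]]] := rep_mul ra ru.
exists (cinv a); apply: (rep_ext ru); exists r'; split => // e he.
have h1 := cvp e he.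
have h2 : ps (cprod a (cinv a)) e @ \oo --> (1 : R).
  by apply: (@cvg_ev _ 1%N) => n; apply: ps_delta0 => k; rewrite cprod_inv.
have := lim_uniq h1 h2 => fu.
have fe : f e != 0 by apply/eqP => fe0; move: fu; rewrite fe0 mul0r => /eqP; rewrite eq_sym oner_eq0.
by rewrite -[u e]mul1r -(mulVf fe) -mulrA fu mulr1.
Qed.


Definition ana f := exists a, rep a f.

Lemma ana_ext f h : ana f -> (exists d, 0 < d /\ forall e, 0 < e < d -> f e = h e) -> ana h.
Proof. by move=> [a ra] H; exists a; apply: rep_ext ra H. Qed.

Lemma ana_cst (v : R) : ana (fun _ => v).
Proof. by eexists; apply: rep_cst. Qed.

Lemma ana_add f g : ana f -> ana g -> ana (fun e => f e + g e).
Proof. by move=> [a ra] [b rb]; eexists; apply: rep_add ra rb. Qed.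

Lemma ana_mul f g : ana f -> ana g -> ana (fun e => f e * g e).
Proof. by move=> [a ra] [b rb]; eexists; apply: rep_mul ra rb. Qed.

Lemma ana_exp j : ana (fun e => e ^+ j).
Proof.
elim: j => [|j IH]; first exact: ana_cst.
have hid : ana (fun e => e) by exists (fun k => (k == 1%N)%:R); exact: rep_id.
have -> : (fun e : R => e ^+ j.+1) = (fun e => e ^+ j * e).
  by apply/funext => e; rewrite exprSr.
exact: ana_mul IH hid.
Qed.

Lemma ex_small (x y : R) : 0 < x -> 0 < y -> exists e, 0 < e /\ e < x /\ e < y.
Proof.
move=> x0 y0; exists (Num.min x y / 2).
have m0 : 0 < Num.min x y by rewrite lt_min x0.
split; first by rewrite divr_gt0.
have h : Num.min x y / 2 < Num.min x y by rewrite ltr_pdivrMr // ltr_pMr // ltr1n.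
by split; apply: (lt_le_trans h); rewrite ge_min lexx ?orbT.
Qed.

Lemma first_nz (b : nat -> R) : ~ (forall k, b k = 0) ->
  exists m, b m != 0 /\ forall k, (k < m)%N -> b k = 0.
Proof.
move=> nz.
have ex : exists k, b k != 0.
  have [k hk] := (proj2 (existsNP _)) nz.
  by exists k; apply/eqP.
case: (ex_minnP ex) => m bm hm; exists m; split => // k km.
apply/eqP; apply: contraTT km => bk; rewrite -leqNgt; exact: hm.
Qed.


Lemma ana_div f g h K : ana f -> ana g ->
  (exists d, 0 < d /\ forall e, 0 < e < d -> g e != 0 /\ `|h e| <= K /\ h e * g e = f e) ->
  ana h.
Proof.
move=> [a ra] [b rb] [d [d0 H]].
case: (pselect (forall k, b k = 0)) => [bz | bnz].
  have [d1 [d10 gz]] := rep_zero rb bz.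
  have [e [e0 [ed ed1]]] := ex_small d0 d10.
  have [gne _] := H e (andb_true_intro (conj e0 ed)).
  by move: gne; rewrite gz ?e0 ?ed1 // eqxx.
have [m [bm bl]] := first_nz bnz.
have rG := rep_shift rb bl.
case: (pselect (forall k, a k = 0)) => [az | anz].
  have [d1 [d10 fz]] := rep_zero ra az.
  apply: (ana_ext (ana_cst 0)); exists (Num.min d d1); split; first by rewrite lt_min d0.
  move=> e /andP[e0]; rewrite lt_min => /andP[ed ed1].
  have [gne [_ hg]] := H e (andb_true_intro (conj e0 ed)).
  move: hg; rewrite fz ?e0 ?ed1 // => /eqP; rewrite mulf_eq0 (negbTE gne) orbF.
  by move/eqP->.
have [m' [am al]] := first_nz anz.
have rF := rep_shift ra al.
case: (ltnP m' m) => hmm; last first.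
  have bm' : (fun k => b (k + m)%N) 0%N != 0 by rewrite /= add0n.
  have [c rc] := rep_inv rG bm'.
  have aF : ana (fun e => f e / e ^+ m') by eexists; exact: rF.
  have aC : ana (fun e => (g e / e ^+ m)^-1) by eexists; exact: rc.
  have P := ana_mul (ana_mul (ana_exp (m' - m)) aF) aC.
  apply: (ana_ext P); exists d; split => // e he.
  have [gne [_ hg]] := H e he.
  have e0 : e != 0 by case/andP: he => e0 _; rewrite gt_eqF.
  rewrite -hg (_ : e ^+ m' = e ^+ (m' - m) * e ^+ m); last by rewrite -exprD subnK.
  have e1 : e ^+ (m' - m) != 0 by rewrite expf_neq0.
  have e2 : e ^+ m != 0 by rewrite expf_neq0.
  by field; rewrite ?gne ?e1 ?e2.
exfalso.
have [d1 [W1 [d10 v1]]] := rep_value rF.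
have [d2 [W2 [d20 v2]]] := rep_value rG.
set W := K * (`|b m| + `|W2|) + `|W1|.
have K0 : 0 <= K.
  have [e [e0 [ed _]]] := ex_small d0 d0.
  have [_ [hk _]] := H e (andb_true_intro (conj e0 ed)).
  exact: le_trans hk.
have W0 : 0 <= W by rewrite addr_ge0 ?mulr_ge0 ?addr_ge0.
have Z0 : 0 < W + 1 by rewrite ltr_wpDl.
have A0 : 0 < `|a m'| by rewrite normr_gt0.
have P1 : 0 < Num.min (Num.min d d1) (Num.min d2 1) by rewrite !lt_min d0 d10 d20 ?ltr01.
have P2 : 0 < `|a m'| / (W + 1) by rewrite divr_gt0.
have [e [e0 [eb ea]]] := ex_small P1 P2.
move: eb; rewrite !lt_min => /andP[/andP[ed ed1] /andP[ed2 e1]].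
have he : 0 < e < d by rewrite e0 ed.
have [gne [hK hg]] := H e he.
have en : e != 0 by rewrite gt_eqF.
have h1 := v1 e (andb_true_intro (conj e0 ed1)).
have h2 := v2 e (andb_true_intro (conj e0 ed2)).
rewrite /= add0n in h1 h2.
set F := f e / e ^+ m' in h1; set G := g e / e ^+ m in h2.
have FG : F = h e * e ^+ (m - m') * G.
  rewrite /F /G -hg (_ : e ^+ m = e ^+ (m - m') * e ^+ m'); last by rewrite -exprD subnK // ltnW.
  have e1' : e ^+ (m - m') != 0 by rewrite expf_neq0.
  have e2' : e ^+ m' != 0 by rewrite expf_neq0.
  by field; rewrite ?e1' ?e2'.
have pe : e ^+ (m - m') <= e.
  have -> : (m - m')%N = (m - m' - 1).+1 by rewrite subn1 prednK // subn_gt0.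
  by rewrite exprS ler_piMr ?exprn_ile1 ?(ltW e0) ?(ltW e1).
have h2' : `|G - b m| <= W2 * e by move: h2; rewrite ?add0n.
have h1' : `|F - a m'| <= W1 * e by move: h1; rewrite ?add0n.
set X := `|b m| + `|W2|.
have hG : `|G| <= X.
  have t1 := ler_normD (G - b m) (b m); rewrite subrK in t1.
  have t2 : W2 * e <= `|W2|.
    apply: (le_trans (ler_norm _)); rewrite normrM (gtr0_norm e0).
    by rewrite ler_piMr // ltW.
  rewrite /X; lra.
have X0 : 0 <= X by rewrite addr_ge0.
have hF : `|F| <= K * e * X.
  rewrite FG normrM; apply: ler_pM => //.
  rewrite normrM (ger0_norm (exprn_ge0 _ (ltW e0))).
  by apply: ler_pM; rewrite ?exprn_ge0 ?(ltW e0).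
have hA : `|a m'| <= `|F| + `|W1| * e.
  have t1 := ler_normD (a m' - F) F; rewrite subrK distrC in t1.
  have t2 : W1 * e <= `|W1| * e by rewrite ler_wpM2r ?(ltW e0) ?ler_norm.
  lra.
have hE : e * (W + 1) < `|a m'| by rewrite -ltr_pdivlMr.
have : e * W = K * e * X + `|W1| * e by rewrite /W /X; ring.
lra.
Qed.



Lemma ana_sum (I : Type) (r : seq I) (P : pred I) (F : I -> R -> R) :
  (forall i, ana (F i)) -> ana (fun e => \sum_(i <- r | P i) F i e).
Proof.
move=> H; elim: r => [|i r IH].
  have -> : (fun e : R => \sum_(i <- [::] | P i) F i e) = (fun _ => 0).
    by apply/funext => e; rewrite big_nil.
  exact: ana_cst.
case Pi: (P i).
  have -> : (fun e : R => \sum_(j <- i :: r | P j) F j e) =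
    (fun e => F i e + \sum_(j <- r | P j) F j e).
    by apply/funext => e; rewrite big_cons Pi.
  exact: ana_add.
have -> : (fun e : R => \sum_(j <- i :: r | P j) F j e) =
  (fun e => \sum_(j <- r | P j) F j e).
  by apply/funext => e; rewrite big_cons Pi.
exact: IH.
Qed.

Lemma ana_prod (I : Type) (r : seq I) (P : pred I) (F : I -> R -> R) :
  (forall i, ana (F i)) -> ana (fun e => \prod_(i <- r | P i) F i e).
Proof.
move=> H; elim: r => [|i r IH].
  have -> : (fun e : R => \prod_(i <- [::] | P i) F i e) = (fun _ => 1).
    by apply/funext => e; rewrite big_nil.
  exact: ana_cst.
case Pi: (P i).
  have -> : (fun e : R => \prod_(j <- i :: r | P j) F j e) =
    (fun e => F i e * \prod_(j <- r | P j) F j e).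
    by apply/funext => e; rewrite big_cons Pi.
  exact: ana_mul.
have -> : (fun e : R => \prod_(j <- i :: r | P j) F j e) =
  (fun e => \prod_(j <- r | P j) F j e).
  by apply/funext => e; rewrite big_cons Pi.
exact: IH.
Qed.

Lemma ana_det n (M : R -> 'M[R]_n) : (forall i j, ana (fun e => M e i j)) ->
  ana (fun e => \det (M e)).
Proof.
move=> H; rewrite /determinant.
apply: ana_sum => s; apply: ana_mul; first exact: ana_cst.
by apply: ana_prod => i; apply: H.
Qed.

Lemma ana_adj n (M : R -> 'M[R]_n) : (forall i j, ana (fun e => M e i j)) ->
  forall i j, ana (fun e => \adj (M e) i j).
Proof.
move=> H i j.
have -> : (fun e => \adj (M e) i j) =
  (fun e => (-1) ^+ (j + i) * \det (row' j (col' i (M e)))).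
  by apply/funext => e; rewrite mxE /cofactor.
apply: ana_mul; first exact: ana_cst.
apply: ana_det => k l.
have -> : (fun e => row' j (col' i (M e)) k l) = (fun e => M e (lift j k) (lift i l)).
  by apply/funext => e; rewrite !mxE.
exact: H.
Qed.

End PS.

Section Markov.
Variable R : realType.
Variable B : nat.
Variable M : 'M[R]_B.
Hypothesis B0 : (0 < B)%N.
Hypothesis Mnn : nonneg_mx M.
Hypothesis Mst : row_stochastic M.
Hypothesis Mirr : irreducible_mx M.

Lemma mpowS k : mpow M k.+1 = M *m mpow M k.
Proof. by []. Qed.

Lemma harmonic_const (x : 'I_B -> R) :
  (forall j, x j = \sum_i M j i * x i) -> forall i j, x i = x j.
Proof.
move=> hx.
have i0 : 'I_B := Ordinal B0.
case: (@arg_maxP _ _ _ i0 predT x isT) => j0 _ hj0.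
have mx : forall i, x i <= x j0 by move=> i; apply: hj0.
have cl : forall j i, x j = x j0 -> 0 < M j i -> x i = x j0.
  move=> j i xj Mji.
  have H0 : \sum_l M j l * (x j0 - x l) = 0.
    under eq_bigr do rewrite mulrBr.
    rewrite sumrB -mulr_suml Mst mul1r -hx xj subrr //.
  have nn : forall l, true -> 0 <= M j l * (x j0 - x l).
    by move=> l _; rewrite mulr_ge0 ?subr_ge0.
  have := @psumr_eq0P _ _ _ _ nn H0 i isT.
  by move/eqP; rewrite mulf_eq0 (gt_eqF Mji) /= subr_eq0 => /eqP.
have prop : forall k j i, x j = x j0 -> 0 < mpow M k j i -> x i = x j0.
  elim=> [|k IH] j i xj.
    rewrite /mpow /= mxE; case E: (_ == _) => /=; last by rewrite ltxx.
    by move/eqP: E => <-.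
  rewrite mpowS mxE => hpos.
  have [l hl] : exists l, 0 < M j l * mpow M k l i.
    case: (pselect (exists l, 0 < M j l * mpow M k l i)) => // H; exfalso.
    have : \sum_l M j l * mpow M k l i <= 0.
      apply: sumr_le0 => l _; rewrite leNgt; apply/negP => h; apply: H; exists l.
      exact: h.
    by rewrite leNgt hpos.
  have Mjl : 0 < M j l.
    rewrite lt_neqAle Mnn andbT; apply/eqP => h; move: hl; by rewrite -h mul0r ltxx.
  have := hl; rewrite pmulr_rgt0 // => Pli.
  apply: (IH l i) => //; exact: cl j l xj Mjl.
have all0 : forall i, x i = x j0.
  by move=> i; have [k hk] := Mirr j0 i; exact: prop k j0 i erefl hk.
by move=> i j; rewrite !all0.
Qed.


Definition Qm : 'M[R]_B := 1%:M - M + const_mx 1.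

Lemma detQ_neq0 p : stationary_dist M p -> \det Qm != 0.
Proof.
move=> [p0 [p1 pM]].
apply/negP; rewrite -det_tr => /det0P [v v0 vQ].
set x := fun i => v 0 i.
have eq1 : forall j, x j - \sum_i M j i * x i + \sum_i x i = 0.
  move=> j; rewrite -[RHS](_ : (v *m Qm^T) 0 j = 0); last by rewrite vQ mxE.
  rewrite mxE.
  under [RHS]eq_bigr do rewrite !mxE mulrDr mulrBr mulr1.
  rewrite big_split sumrB /=; congr (_ - _ + _).
    rewrite (bigD1 j) //= eqxx mulr1 big1 ?addr0 // => i /negbTE.
    by rewrite eq_sym => ->; rewrite mulr0.
  by apply: eq_bigr => i _; rewrite mulrC.
have S0 : \sum_i x i = 0.
  have : \sum_j p 0 j * (x j - \sum_i M j i * x i + \sum_i x i) = 0.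
    by rewrite big1 // => j _; rewrite eq1 mulr0.
  under eq_bigr do rewrite mulrDr mulrBr.
  rewrite big_split sumrB /= -mulr_suml p1 mul1r.
  have -> : \sum_j p 0 j * \sum_i M j i * x i = \sum_j p 0 j * x j.
    under eq_bigr do rewrite mulr_sumr.
    rewrite exchange_big /=; apply: eq_bigr => i _.
    rewrite -[in RHS](_ : (p *m M) 0 i = p 0 i); last by rewrite pM.
    by rewrite mxE mulr_suml; apply: eq_bigr => j _; rewrite mulrA.
  by rewrite subrr add0r.
have harm : forall j, x j = \sum_i M j i * x i.
  by move=> j; have := eq1 j; rewrite S0 addr0 => /eqP; rewrite subr_eq0 => /eqP.
have hc := harmonic_const harm.
have i0 : 'I_B := Ordinal B0.
have xi0 : x i0 = 0.
  move: S0; under eq_bigr do rewrite (hc _ i0).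
  rewrite sumr_const card_ord => /eqP; rewrite mulrn_eq0 /=.
  by case/orP => [/eqP B00|/eqP //]; move: B0; rewrite B00.
move: v0; apply/negP; rewrite negbK; apply/eqP/rowP => i.
rewrite [RHS]mxE.
have -> : v 0 i = x i by [].
by rewrite (hc i i0).
Qed.


Lemma pi_adj p : stationary_dist M p -> forall j,
  \det Qm * p 0 j = \sum_i \adj Qm i j.
Proof.
move=> [p0 [p1 pM]] j.
have pQ : p *m Qm = const_mx 1.
  rewrite /Qm mulmxDr mulmxBr mulmx1 pM subrr add0r.
  apply/rowP => k; rewrite !mxE.
  by under eq_bigr do rewrite mxE mulr1.
have := congr1 (fun A : 'M[R]_(1, B) => A 0 j) (congr1 (mulmx^~ (\adj Qm)) pQ).
rewrite /= -mulmxA mul_mx_adj mul_mx_scalar !mxE => ->.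
by apply: eq_bigr => i _; rewrite mxE mul1r.
Qed.

End Markov.

Section Tup.
Variable R : realType.
Variable T : finType.

Lemma sum_tuple_cons n (F : seq T -> R) :
  \sum_(t : n.+1.-tuple T) F t = \sum_(x : T) \sum_(t : n.-tuple T) F (x :: t).
Proof.
rewrite pair_big /=.
pose h (p : T * n.-tuple T) : n.+1.-tuple T := [tuple of p.1 :: p.2].
pose g (t : n.+1.-tuple T) : T * n.-tuple T := (thead t, [tuple of behead t]).
rewrite (reindex h) /=; last first.
  exists g => [[x t]|t] _.
    by congr (_, _); apply: val_inj.
  by case/tupleP: t => x t; apply: val_inj.
by apply: eq_bigr => -[x t] _.
Qed.

Lemma sum_tuple0 (F : seq T -> R) : \sum_(t : 0.-tuple T) F t = F [::].
Proof.
rewrite (big_pred1 [tuple]) // => t /=.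
by apply/esym/eqP; apply: val_inj; rewrite /= tuple0.
Qed.

End Tup.

Section Prob.
Variable R : realType.
Variables B A : nat.
Variable Phi : 'I_B -> 'I_A.
Variable p : 'rV[R]_B.
Variable M : 'M[R]_B.

Definition gw (x : 'I_B) (w : seq 'I_A) : R :=
  \sum_(y : (size w).-tuple 'I_B | map Phi y == w) trans_prob M x y.

Lemma gw_nil x : gw x [::] = 1.
Proof.
rewrite /gw big_mkcond.
by rewrite (sum_tuple0 (fun s => if map Phi s == [::] then trans_prob M x s else 0)).
Qed.

Lemma gw_cons x a w : gw x (a :: w) = \sum_(y | Phi y == a) M x y * gw y w.
Proof.
rewrite /gw big_mkcond /=.
rewrite (sum_tuple_cons (size w) (fun s => if map Phi s == a :: w then trans_prob M x s else 0)).
rewrite [RHS]big_mkcond; apply: eq_bigr => y _ /=.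
under eq_bigr do rewrite eqseq_cons.
case: (Phi y == a) => /=; last by rewrite big1.
rewrite mulr_sumr [RHS]big_mkcond; apply: eq_bigr => t _.
by case: (map Phi t == w); rewrite ?mulr0.
Qed.

Lemma cyl_nil : cyl_prob Phi p M [::] = 1.
Proof.
rewrite /cyl_prob big_mkcond.
by rewrite (sum_tuple0 (fun s => if map Phi s == [::] then path_prob p M s else 0)).
Qed.

Lemma cyl_cons a w : cyl_prob Phi p M (a :: w) = \sum_(y | Phi y == a) p 0 y * gw y w.
Proof.
rewrite /cyl_prob big_mkcond /=.
rewrite (sum_tuple_cons (size w) (fun s => if map Phi s == a :: w then path_prob p M s else 0)).
rewrite [RHS]big_mkcond; apply: eq_bigr => y _ /=.
under eq_bigr do rewrite eqseq_cons.
case: (Phi y == a) => /=; last by rewrite big1.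
rewrite /gw mulr_sumr [RHS]big_mkcond; apply: eq_bigr => t _.
by case: (map Phi t == w); rewrite ?mulr0.
Qed.


Hypothesis Mnn : nonneg_mx M.
Hypothesis Mst : row_stochastic M.
Hypothesis p0 : forall j, 0 <= p 0 j.
Hypothesis p1 : \sum_(j < B) p 0 j = 1.

Lemma trans_nn x ys : 0 <= trans_prob M x ys.
Proof. by elim: ys x => [|y ys IH] x //=; rewrite mulr_ge0. Qed.

Lemma path_nn ys : 0 <= path_prob p M ys.
Proof. by case: ys => [|y ys] //=; rewrite mulr_ge0 ?trans_nn. Qed.

Lemma gw_nn x w : 0 <= gw x w.
Proof. by rewrite sumr_ge0 // => t _; rewrite trans_nn. Qed.

Lemma cyl_nn w : 0 <= cyl_prob Phi p M w.
Proof. by rewrite sumr_ge0 // => t _; rewrite path_nn. Qed.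

Lemma joint_nn w b : 0 <= joint_last Phi p M w b.
Proof. by rewrite sumr_ge0 // => t _; rewrite path_nn. Qed.

Lemma joint_le w b : joint_last Phi p M w b <= cyl_prob Phi p M w.
Proof.
rewrite /joint_last /cyl_prob [X in _ <= X](bigID (fun y : (size w).-tuple 'I_B => last b y == b)) /=.
by rewrite lerDl sumr_ge0 // => t _; rewrite path_nn.
Qed.

Lemma sum_sub_le (F : 'I_B -> R) (P : pred 'I_B) : (forall y, 0 <= F y) ->
  \sum_(y | P y) F y <= \sum_y F y.
Proof.
move=> H; rewrite big_mkcond; apply: ler_sum => y _.
by case: (P y).
Qed.

Lemma gw_rcons x w a : gw x (rcons w a) <= gw x w.
Proof.
elim: w x => [|b w IH] x /=.
  rewrite gw_cons gw_nil; under eq_bigr do rewrite gw_nil mulr1.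
  by rewrite -(Mst x); apply: sum_sub_le.
rewrite !gw_cons; apply: ler_sum => y _.
by apply: ler_wpM2l => //; apply: IH.
Qed.

Lemma cyl_rcons w a : cyl_prob Phi p M (rcons w a) <= cyl_prob Phi p M w.
Proof.
case: w => [|b w] /=.
  rewrite cyl_cons cyl_nil; under eq_bigr do rewrite gw_nil mulr1.
  by rewrite -p1; apply: sum_sub_le.
rewrite !cyl_cons; apply: ler_sum => y _.
by apply: ler_wpM2l => //; apply: gw_rcons.
Qed.

End Prob.

Section AnaProb.
Variable R : realType.
Variables B A : nat.
Variable Phi : 'I_B -> 'I_A.
Variable P : R -> 'rV[R]_B.
Variable D : R -> 'M[R]_B.
Hypothesis hD : forall i j, ana (fun e => D e i j).
Hypothesis hP : forall j, ana (fun e => P e 0 j).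

Lemma ana_trans x ys : ana (fun e => trans_prob (D e) x ys).
Proof.
elim: ys x => [|y ys IH] x /=; first exact: ana_cst.
exact: ana_mul.
Qed.

Lemma ana_path ys : ana (fun e => path_prob (P e) (D e) ys).
Proof.
case: ys => [|y ys] /=; first exact: ana_cst.
apply: ana_mul => //; exact: ana_trans.
Qed.

Lemma ana_cyl w : ana (fun e => cyl_prob Phi (P e) (D e) w).
Proof. by rewrite /cyl_prob; apply: ana_sum => t; apply: ana_path. Qed.

Lemma ana_joint w b : ana (fun e => joint_last Phi (P e) (D e) w b).
Proof. by rewrite /joint_last; apply: ana_sum => t; apply: ana_path. Qed.

End AnaProb.

Section Conv.
Variable R : realType.

Lemma ana_of_closed (f : R -> R) : analytic_at0_closed f -> ana f.
Proof.
move=> [a [r [r0 H]]].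
set e0 := r / 2.
have e00 : 0 < e0 by rewrite divr_gt0.
have e0r : e0 < r by rewrite ltr_pdivrMr // ltr_pMr // ltr1n.
have hc := H e0; rewrite (ltW e00) e0r in hc; have {hc} hc := hc isT.
have cv : cvgn (ps a e0) by apply: cvgP hc.
rewrite ps_series in cv.
move: (cvg_series_bounded cv) => [K0 [_]] /(_ (`|K0| + 1)).
rewrite (le_lt_trans (ler_norm _)) ?ltrDl // => /(_ erefl) hK.
exists a, (`|K0| + 1), e0^-1, r; split; first by rewrite invr_gt0.
split => //; split.
  move=> k; have := hK k I; rewrite /= normrM normrX (gtr0_norm e00).
  have ek : 0 < e0 ^+ k by rewrite exprn_gt0.
  by rewrite exprVn ler_pdivlMr.
move=> e /andP[e0' er]; apply: H; rewrite er (ltW e0') //.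
Qed.

Lemma analytic_of_ana (f : R -> R) : ana f -> analytic_at0 f.
Proof. by move=> [a [C [L [r [_ [r0 [_ H]]]]]]]; exists a, r; split. Qed.

Lemma ana_opp (f : R -> R) : ana f -> ana (fun e => - f e).
Proof.
move=> hf; have -> : (fun e => - f e) = (fun e => -1 * f e).
  by apply/funext => e; rewrite mulN1r.
exact: ana_mul (ana_cst (-1)) hf.
Qed.

End Conv.

Section Main.
Variable R : realType.

Lemma ana_ratio (f g h : R -> R) : ana f -> ana g ->
  (exists d, 0 < d /\ forall e, 0 < e < d -> 0 < g e /\ 0 <= f e <= g e /\ h e = f e / g e) ->
  ana h.
Proof.
move=> af ag [d [d0 H]]; apply: (ana_div (K := 1) af ag); exists d; split => // e he.
have [g0 [/andP[f0 fg] ->]] := H e he.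
split; first by rewrite gt_eqF.
split; last by rewrite divfK // gt_eqF.
by rewrite ger0_norm ?divr_ge0 ?(ltW g0) // ler_pdivrMr // mul1r.
Qed.

End Main.

Theorem proposition2p3 (R : realType) (B A : nat) (Phi : 'I_B -> 'I_A)
  (Delta : R -> 'M[R]_B) (pi : R -> 'rV[R]_B) :
  (0 < B)%N ->
  (forall i j : 'I_B, analytic_at0_closed (fun e => Delta e i j)) ->
  (forall e : R, 0 <= e -> row_stochastic (Delta e)) ->
  (forall e : R, 0 < e -> nonneg_mx (Delta e) /\ irreducible_mx (Delta e)) ->
  (forall e : R, 0 < e -> stationary_dist (Delta e) (pi e)) ->
  forall (n : nat) (z : n.+1.-tuple 'I_A),
    analytic_at0 (fun e => cyl_prob Phi (pi e) (Delta e) (take n z))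
    /\ (forall j : nat, (j < n)%N ->
          (exists d : R, 0 < d /\ forall e, 0 < e < d ->
             0 < cyl_prob Phi (pi e) (Delta e) (take j.+1 z)) ->
          forall b : 'I_B,
            analytic_at0 (fun e => cond_state Phi (pi e) (Delta e) (take j.+1 z) b))
    /\ ((exists d : R, 0 < d /\ forall e, 0 < e < d ->
             0 < cyl_prob Phi (pi e) (Delta e) (take n z)) ->
          analytic_at0 (fun e => cond_next Phi (pi e) (Delta e) (take n z)
                                   (last (thead z) z))).
Proof.
move=> B0 hDc hst hirr hsd n z.
have hD : forall i j, ana (fun e => Delta e i j) by move=> i j; apply: ana_of_closed.
have hQ : forall i j, ana (fun e => Qm (Delta e) i j).
  move=> i j.
  have -> : (fun e => Qm (Delta e) i j) =
     (fun e => ((i == j)%:R + - Delta e i j) + 1).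
    by apply/funext => e; rewrite !mxE.
  by apply: ana_add; [apply: ana_add; [apply: ana_cst | apply: ana_opp] | apply: ana_cst].
have hpi : forall j, ana (fun e => pi e 0 j).
  move=> j.
  apply: (ana_div (K := 1) (f := fun e => \sum_i \adj (Qm (Delta e)) i j)
     (g := fun e => \det (Qm (Delta e)))).
  - by apply: ana_sum => i; apply: ana_adj.
  - exact: ana_det.
  exists 1; split => // e /andP[e0 _].
  have [nn irr] := hirr e e0.
  have st := hst e (ltW e0).
  have sd := hsd e e0.
  split; first by have := detQ_neq0 B0 nn st irr sd.
  split; last by rewrite mulrC pi_adj.
  have [p0 [p1 _]] := sd.
  rewrite ger0_norm // -p1 (bigD1 j) //= lerDl sumr_ge0 // => i _.
have acyl := fun w => ana_cyl Phi hD hpi w.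
have ajoint := fun w b => ana_joint Phi hD hpi w b.
split; first exact: analytic_of_ana.
split.
  move=> j jn [d [d0 Hd]] b; apply: analytic_of_ana.
  apply: (ana_ratio (ajoint _ b) (acyl _)); exists d; split => // e he.
  have e0 : 0 < e by case/andP: he.
  have [nn _] := hirr e e0; have st := hst e (ltW e0).
  have [p0 [p1 _]] := hsd e e0.
  split; first exact: Hd.
  split => //.
  by rewrite joint_nn ?joint_le.
move=> [d [d0 Hd]]; apply: analytic_of_ana.
apply: (ana_ratio (acyl _) (acyl _)); exists d; split => // e he.
have e0 : 0 < e by case/andP: he.
have [nn _] := hirr e e0; have st := hst e (ltW e0).
have [p0 [p1 _]] := hsd e e0.
split; first exact: Hd.
split => //.
by rewrite cyl_nn ?cyl_rcons.
Qed.
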